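(* Let $\alpha\in(0,1/2)$ and $H\in C^{2\alpha}([0,1])\cap D_\alpha$. For $M\ge2$, $y_l=l/M$, $\delta=1/M$, let $H_k:=\frac1M\sum_{l=1}^{M-1}H(y_l)e_k(y_l)$ and $H^M:=\sum_{k=1}^{M-1}H_ke_k$. Then there is a constant $C>0$ (independent of $H$ and $M$) such that $$\|H-H^M\|^2_{L^2}\le CK^2\delta^{\frac{8\alpha^2}{4\alpha+1}},\qquad K:=\max\big(\|H\|_\infty,\|H\|_{C^{2\alpha}},\|H\|_{D_\alpha}\big).$$
   Context: $e_k(y)=\sqrt2\sin(\pi ky)$, $\lambda_k=\vartheta\pi^2k^2$ for a fixed $\vartheta>0$; $D_\alpha=\{u\in L^2((0,1)):\sum_k\lambda_k^{2\alpha}\langle u,e_k\rangle^2<\infty\}$ with norm $\|u\|_{D_\alpha}=(\sum_k\lambda_k^{2\alpha}\langle u,e_k\rangle_{L^2}^2)^{1/2}$; $C^{2\alpha}([0,1])$ the Hölder space with norm $\|u\|_\infty+\sup_{x\ne y}|u(x)-u(y)|/|x-y|^{2\alpha}$; $\|\cdot\|_{L^2}$ the norm of $L^2((0,1))$. *)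

(* Defs.v *)
From Stdlib Require Import Reals.
From Coquelicot Require Import Coquelicot.
Open Scope R_scope.

Definition ek (k : nat) (y : R) : R := sqrt 2 * sin (PI * INR k * y).
Definition lambda (theta : R) (k : nat) : R := theta * PI ^ 2 * INR k ^ 2.

(* L^2((0,1)) inner product and squared norm (Riemann integral; all functions
   to which these are applied below are continuous on [0,1]). *)
Definition L2inner (u v : R -> R) : R := RInt (fun y => u y * v y) 0 1.
Definition L2norm_sq (u : R -> R) : R := RInt (fun y => (u y) ^ 2) 0 1.

Definition Dterm (theta alpha : R) (u : R -> R) (n : nat) : R :=
  Rpower (lambda theta (S n)) (2 * alpha) * (L2inner u (ek (S n))) ^ 2.
Definition in_D (theta alpha : R) (u : R -> R) : Prop :=
  ex_series (Dterm theta alpha u).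
Definition Dnorm (theta alpha : R) (u : R -> R) : R :=
  sqrt (Series (Dterm theta alpha u)).

Definition supnorm (u : R -> R) : R :=
  real (Lub_Rbar (fun r => exists x, 0 <= x <= 1 /\ r = Rabs (u x))).

Definition in_holder (beta : R) (u : R -> R) : Prop :=
  exists L : R, forall x y, 0 <= x <= 1 -> 0 <= y <= 1 ->
    Rabs (u x - u y) <= L * Rpower (Rabs (x - y)) beta.
Definition holder_seminorm (beta : R) (u : R -> R) : R :=
  real (Lub_Rbar (fun r => exists x y, 0 <= x <= 1 /\ 0 <= y <= 1 /\ x <> y /\
          r = Rabs (u x - u y) / Rpower (Rabs (x - y)) beta)).
Definition holder_norm (beta : R) (u : R -> R) : R :=
  supnorm u + holder_seminorm beta u.

Definition Hcoef (M : nat) (H : R -> R) (k : nat) : R :=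
  / INR M * sum_n_m (fun l => H (INR l / INR M) * ek k (INR l / INR M)) 1 (M - 1).
Definition HM (M : nat) (H : R -> R) (y : R) : R :=
  sum_n_m (fun k => Hcoef M H k * ek k y) 1 (M - 1).

(* Main.v *)
Require Import Defs.
From Stdlib Require Import Reals Lra Lia.
From Coquelicot Require Import Coquelicot.
Open Scope R_scope.

Lemma sumS (a: nat->R) n m: (n <= S m)%nat -> @eq R (sum_n_m a n (S m)) (sum_n_m a n m + a (S m)).
Proof. intros; rewrite sum_n_Sm; auto. Qed.
Lemma sumL (a: nat->R) n m: (n <= m)%nat -> @eq R (sum_n_m a n m) (a n + sum_n_m a (S n) m).
Proof. intros; rewrite sum_Sn_m; auto. Qed.
Lemma sum0 (a: nat->R) n m: (m < n)%nat -> @eq R (sum_n_m a n m) 0.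
Proof. intros; rewrite sum_n_m_zero; auto. Qed.
Lemma ss_ext (a b: nat->R) n m: (forall k, (n <= k <= m)%nat -> a k = b k) -> @eq R (sum_n_m a n m) (sum_n_m b n m).
Proof. apply sum_n_m_ext_loc. Qed.
Lemma ss_zero (a: nat->R) n m: (forall k, (n <= k <= m)%nat -> a k = 0) -> @eq R (sum_n_m a n m) 0.
Proof. intros H; rewrite (ss_ext a (fun _ => 0)); auto. apply (sum_n_m_const_zero (G:=R_AbelianMonoid)). Qed.
Lemma ss_plus (a b: nat->R) n m: @eq R (sum_n_m (fun k => a k + b k) n m) (sum_n_m a n m + sum_n_m b n m).
Proof. apply (sum_n_m_plus (G:=R_AbelianMonoid)). Qed.
Lemma ss_mult_l (c: R) (a: nat->R) n m: @eq R (sum_n_m (fun k => c * a k) n m) (c * sum_n_m a n m).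
Proof. apply (sum_n_m_mult_l (K:=R_Ring)). Qed.
Lemma ss_mult_r (c: R) (a: nat->R) n m: @eq R (sum_n_m (fun k => a k * c) n m) (sum_n_m a n m * c).
Proof. apply (sum_n_m_mult_r (K:=R_Ring)). Qed.
Lemma ss_opp (a: nat->R) n m: @eq R (sum_n_m (fun k => - a k) n m) (- sum_n_m a n m).
Proof. rewrite (ss_ext _ (fun k => (-1) * a k)). rewrite ss_mult_l; ring. intros; ring. Qed.
Lemma ss_minus (a b: nat->R) n m: @eq R (sum_n_m (fun k => a k - b k) n m) (sum_n_m a n m - sum_n_m b n m).
Proof. unfold Rminus. rewrite ss_plus, ss_opp. auto. Qed.
Lemma ss_le (a b: nat->R) n m: (forall k, (n <= k <= m)%nat -> a k <= b k) -> sum_n_m a n m <= sum_n_m b n m.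
Proof.
  intros H. destruct (Compare_dec.le_lt_dec n m) as [Hnm|Hnm].
  - induction m. assert (n = 0)%nat by lia; subst. rewrite !sum_n_n. apply H; lia.
    destruct (Nat.eq_dec n (S m)). subst. rewrite !sum_n_n. apply H; lia.
    rewrite !sumS by lia. apply Rplus_le_compat. apply IHm; [intros; apply H; lia| lia]. apply H; lia.
  - rewrite !sum0 by lia. lra.
Qed.
Lemma ss_nonneg (a: nat->R) n m: (forall k, (n <= k <= m)%nat -> 0 <= a k) -> 0 <= sum_n_m a n m.
Proof. intros H. replace 0 with (sum_n_m (fun _ => 0) n m) by (apply ss_zero; auto). apply ss_le. exact H. Qed.
Lemma ss_const (c: R) n m: @eq R (sum_n_m (fun _ => c) n m) (INR (S m - n) * c).
Proof. apply sum_n_m_const. Qed.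

Lemma ss_switch (u: nat->nat->R) a b c d:
  @eq R (sum_n_m (fun i => sum_n_m (u i) c d) a b) (sum_n_m (fun j => sum_n_m (fun i => u i j) a b) c d).
Proof.
  induction b.
  - destruct a. rewrite sum_n_n. apply ss_ext; intros; rewrite sum_n_n; auto.
    rewrite sum0 by lia. symmetry; apply ss_zero; intros; apply sum0; lia.
  - destruct (Compare_dec.le_lt_dec a (S b)).
    + rewrite sumS by lia. rewrite IHb. rewrite <- ss_plus. apply ss_ext; intros.
      rewrite sumS by lia. auto.
    + rewrite sum0 by lia. symmetry; apply ss_zero; intros; apply sum0; lia.
Qed.

Lemma ss_kron (x: R) (l a b: nat) : (a <= l <= b)%nat ->
  @eq R (sum_n_m (fun m => if Nat.eqb m l then x else 0) a b) x.
Proof.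
  intros Hl. induction b.
  - assert (a = 0 /\ l = 0)%nat as [-> ->] by lia. rewrite sum_n_n. auto.
  - destruct (Nat.eq_dec l (S b)).
    + subst. rewrite sumS by lia. rewrite ss_zero. rewrite Nat.eqb_refl; ring.
      intros k Hk. destruct (Nat.eqb_spec k (S b)); [lia|auto].
    + rewrite sumS by lia. rewrite IHb by lia. destruct (Nat.eqb_spec (S b) l); [lia|ring].
Qed.

Lemma two_sin_cos a b : 2 * sin b * cos a = sin (a + b) - sin (a - b).
Proof. rewrite sin_plus, sin_minus; ring. Qed.
Lemma two_cos_cos a b : 2 * cos a * cos b = cos (a - b) + cos (a + b).
Proof. rewrite cos_plus, cos_minus; ring. Qed.
Lemma two_sin_sin a b : 2 * sin a * sin b = cos (a - b) - cos (a + b).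
Proof. rewrite cos_plus, cos_minus; ring. Qed.

Lemma tel_cos th ph L : 2 * sin (th/2) * sum_n_m (fun l => cos (INR l * th + ph)) 0 L
   = sin ((INR L + /2) * th + ph) - sin (ph - th/2).
Proof.
  induction L.
  - rewrite sum_n_n. simpl. rewrite two_sin_cos. f_equal; f_equal; field.
  - rewrite sumS by lia. rewrite Rmult_plus_distr_l, IHL, two_sin_cos.
    rewrite S_INR. replace (((INR L + 1) * th + ph) - th/2) with ((INR L + / 2) * th + ph) by field.
    replace ((INR L + 1) * th + ph + th / 2) with ((INR L + 1 + / 2) * th + ph) by field. ring.
Qed.

Lemma sin_nPI n : sin (INR n * PI) = 0.
Proof. induction n. simpl; rewrite Rmult_0_l; apply sin_0. rewrite S_INR, Rmult_plus_distr_r, Rmult_1_l, sin_plus, IHn, sin_PI; ring. Qed.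
Lemma cos_nPI n : cos (INR n * PI) = (-1) ^ n.
Proof. induction n. simpl; rewrite Rmult_0_l; apply cos_0. rewrite S_INR, Rmult_plus_distr_r, Rmult_1_l, cos_plus, IHn, sin_PI, cos_PI; simpl; ring. Qed.

Lemma sin_half_pos (M n : nat) : (0 < n < 2 * M)%nat -> 0 < sin ((PI * INR n / INR M) / 2).
Proof.
  intros H. assert (0 < INR M) by (apply lt_0_INR; lia).
  assert (0 < INR n) by (apply lt_0_INR; lia).
  assert (INR n < 2 * INR M) by (replace 2 with (INR 2) by auto; rewrite <- mult_INR; apply lt_INR; lia).
  pose proof PI_RGT_0. apply sin_gt_0.
  - apply Rmult_lt_0_compat; [|lra]. apply Rdiv_lt_0_compat; auto. nra.
  - apply (Rmult_lt_reg_r (2 * INR M)). lra. field_simplify; try lra. nra.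
Qed.

Lemma Zsum (M n : nat) ph : (0 < n < 2 * M)%nat ->
  sum_n_m (fun l => cos (INR l * (PI * INR n / INR M) + ph)) 0 (2 * M - 1) = 0.
Proof.
  intros H. set (th := PI * INR n / INR M).
  pose proof (sin_half_pos M n H). fold th in H0.
  pose proof (tel_cos th ph (2*M-1)).
  assert (INR M > 0) by (apply lt_0_INR; lia).
  assert ((INR (2 * M - 1) + / 2) * th + ph = (ph - th/2) + 2 * INR n * PI).
  { rewrite minus_INR by lia. rewrite mult_INR. unfold th. simpl. field. lra. }
  rewrite H3, sin_period in H1. apply (Rmult_eq_reg_l (2 * sin (th/2))). lra. lra.
Qed.

Lemma Csum (M n : nat) : (1 <= M)%nat -> (0 < n < 2 * M)%nat ->
  sum_n_m (fun k => cos (INR k * (PI * INR n / INR M))) 1 (M - 1) = - (1 + (-1) ^ n) / 2.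
Proof.
  intros HM H. set (th := PI * INR n / INR M).
  pose proof (sin_half_pos M n H). fold th in H0.
  pose proof (tel_cos th 0 (M-1)).
  assert (INR M > 0) by (apply lt_0_INR; lia).
  rewrite (ss_ext _ (fun l => cos (INR l * th))) in H1 by (intros; rewrite Rplus_0_r; auto).
  assert ((INR (M - 1) + / 2) * th + 0 = INR n * PI - th/2).
  { rewrite minus_INR by lia. unfold th. simpl. field. lra. }
  rewrite H3, sin_minus, sin_nPI, cos_nPI in H1.
  rewrite sumL in H1 by lia. simpl in H1. rewrite Rmult_0_l, cos_0 in H1.
  replace (0 - th/2) with (- (th/2)) in H1 by ring. rewrite sin_neg in H1.
  apply (Rmult_eq_reg_l (2 * sin (th/2))). 2: lra.
  replace (2 * sin (th / 2) * sum_n_m (fun l : nat => cos (INR l * th)) 1 (M - 1))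
    with (2 * sin (th / 2) * (1 + sum_n_m (fun l : nat => cos (INR l * th)) 1 (M - 1)) - 2 * sin (th/2)) by ring.
  rewrite H1. field.
Qed.

Lemma ek_prod k x y : ek k x * ek k y = cos (PI * INR k * x - PI * INR k * y) - cos (PI * INR k * x + PI * INR k * y).
Proof. unfold ek. rewrite <- two_sin_sin. replace 2 with (sqrt 2 * sqrt 2) at 3 by (apply sqrt_sqrt; lra). ring. Qed.

Lemma neg1_pow_even l : (-1) ^ (2 * l) = 1.
Proof. rewrite pow_sqr. replace ((-1) * (-1)) with 1 by ring. apply pow1. Qed.

Lemma DO_ge (M m l : nat) : (2 <= M)%nat -> (1 <= l <= m)%nat -> (m <= M - 1)%nat ->
  @eq R (sum_n_m (fun k => ek k (INR m / INR M) * ek k (INR l / INR M)) 1 (M - 1))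
  (if Nat.eqb m l then INR M else 0).
Proof.
  intros HM Hl Hm. assert (0 < INR M) by (apply lt_0_INR; lia).
  rewrite (ss_ext _ (fun k => cos (INR k * (PI * INR (m - l) / INR M)) - cos (INR k * (PI * INR (m + l) / INR M)))).
  2:{ intros k _. rewrite ek_prod. rewrite minus_INR by lia. rewrite plus_INR. f_equal; f_equal; field; lra. }
  rewrite ss_minus.
  rewrite (Csum M (m + l)) by lia.
  destruct (Nat.eqb_spec m l).
  - subst. rewrite Nat.sub_diag. rewrite (ss_ext _ (fun _ => 1)).
    2:{ intros; simpl; rewrite Rmult_0_r, Rdiv_0_l, Rmult_0_r. apply cos_0. }
    rewrite ss_const. replace (l + l)%nat with (2 * l)%nat by lia. rewrite neg1_pow_even.
    rewrite minus_INR by lia. rewrite S_INR, minus_INR by lia. simpl. field.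
  - rewrite (Csum M (m - l)) by lia.
    replace (m + l)%nat with ((m - l) + 2 * l)%nat by lia. rewrite pow_add, neg1_pow_even. field.
Qed.

Lemma DO (M m l : nat) : (2 <= M)%nat -> (1 <= l <= M - 1)%nat -> (1 <= m <= M - 1)%nat ->
  @eq R (sum_n_m (fun k => ek k (INR m / INR M) * ek k (INR l / INR M)) 1 (M - 1))
  (if Nat.eqb m l then INR M else 0).
Proof.
  intros HM Hl Hm. destruct (Compare_dec.le_lt_dec l m).
  - apply DO_ge; lia.
  - rewrite (ss_ext _ (fun k => ek k (INR l / INR M) * ek k (INR m / INR M))) by (intros; ring).
    rewrite DO_ge by lia. destruct (Nat.eqb_spec l m), (Nat.eqb_spec m l); auto; lia.
Qed.

Lemma interp_nodes (M : nat) (H : R -> R) (l : nat) : (2 <= M)%nat -> (1 <= l <= M - 1)%nat ->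
  HM M H (INR l / INR M) = H (INR l / INR M).
Proof.
  intros HM2 Hl. assert (0 < INR M) by (apply lt_0_INR; lia).
  unfold HM, Hcoef.
  rewrite (ss_ext _ (fun k => / INR M * sum_n_m (fun m => H (INR m / INR M) * (ek k (INR m / INR M) * ek k (INR l / INR M))) 1 (M - 1))).
  2:{ intros k _. rewrite Rmult_assoc, <- ss_mult_r. f_equal. apply ss_ext; intros; ring. }
  rewrite ss_mult_l, ss_switch.
  rewrite (ss_ext _ (fun m => H (INR m / INR M) * (if Nat.eqb m l then INR M else 0))).
  2:{ intros m Hm. rewrite ss_mult_l. rewrite DO by lia. auto. }
  rewrite (ss_ext _ (fun m => if Nat.eqb m l then H (INR l / INR M) * INR M else 0)).
  2:{ intros m _. destruct (Nat.eqb_spec m l); subst; ring. }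
  rewrite ss_kron by lia. field. lra.
Qed.

Lemma sq_sum (a : nat -> R) n m :
  (sum_n_m a n m) ^ 2 = sum_n_m (fun j => sum_n_m (fun k => a j * a k) n m) n m.
Proof.
  simpl pow; rewrite Rmult_1_r. rewrite <- ss_mult_r. apply ss_ext; intros. rewrite <- ss_mult_l. auto.
Qed.

Lemma Ocos_gt (M j k : nat) (p q : R) : (2 <= M)%nat -> (1 <= k < j)%nat -> (j <= M - 1)%nat ->
  @eq R (sum_n_m (fun l => cos (INR l * (PI * INR j / INR M) + p) * cos (INR l * (PI * INR k / INR M) + q)) 0 (2 * M - 1)) 0.
Proof.
  intros HM Hk Hj. assert (0 < INR M) by (apply lt_0_INR; lia).
  rewrite (ss_ext _ (fun l => / 2 * (cos (INR l * (PI * INR (j - k) / INR M) + (p - q))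
          + cos (INR l * (PI * INR (j + k) / INR M) + (p + q))))).
  2:{ intros n0 _. rewrite minus_INR by lia. rewrite plus_INR.
      set (A := INR n0 * (PI * INR j / INR M) + p). set (B := INR n0 * (PI * INR k / INR M) + q).
      replace (INR n0 * (PI * (INR j - INR k) / INR M) + (p - q)) with (A - B) by (unfold A, B; field; lra).
      replace (INR n0 * (PI * (INR j + INR k) / INR M) + (p + q)) with (A + B) by (unfold A, B; field; lra).
      rewrite <- two_cos_cos. field. }
  rewrite ss_mult_l, ss_plus, !Zsum by lia. ring.
Qed.

Lemma Ocos_eq (M j : nat) (p : R) : (2 <= M)%nat -> (1 <= j <= M - 1)%nat ->
  @eq R (sum_n_m (fun l => cos (INR l * (PI * INR j / INR M) + p) * cos (INR l * (PI * INR j / INR M) + p)) 0 (2 * M - 1)) (INR M).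
Proof.
  intros HM Hj. assert (0 < INR M) by (apply lt_0_INR; lia).
  rewrite (ss_ext _ (fun l => / 2 * (1 + cos (INR l * (PI * INR (j + j) / INR M) + (p + p))))).
  2:{ intros n _. rewrite plus_INR.
      set (A := INR n * (PI * INR j / INR M) + p).
      replace (INR n * (PI * (INR j + INR j) / INR M) + (p + p)) with (A + A) by (unfold A; field; lra).
      rewrite <- cos_0. replace 0 with (A - A) by ring. rewrite <- two_cos_cos. field. }
  rewrite ss_mult_l, ss_plus, Zsum by lia. rewrite ss_const.
  replace (S (2 * M - 1) - 0)%nat with (2 * M)%nat by lia. rewrite mult_INR. simpl. field.
Qed.

Lemma Ocos (M j k : nat) (ph : nat -> R) : (2 <= M)%nat -> (1 <= j <= M - 1)%nat -> (1 <= k <= M - 1)%nat ->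
  @eq R (sum_n_m (fun l => cos (INR l * (PI * INR j / INR M) + ph j) * cos (INR l * (PI * INR k / INR M) + ph k)) 0 (2 * M - 1))
   (if Nat.eqb j k then INR M else 0).
Proof.
  intros HM Hj Hk. destruct (Nat.eqb_spec j k).
  - subst. apply Ocos_eq; lia.
  - destruct (Compare_dec.le_lt_dec j k).
    + rewrite (ss_ext _ (fun l => cos (INR l * (PI * INR k / INR M) + ph k) * cos (INR l * (PI * INR j / INR M) + ph j))) by (intros; ring).
      apply Ocos_gt; lia.
    + apply Ocos_gt; lia.
Qed.

Lemma GL (M : nat) (c ph : nat -> R) : (2 <= M)%nat ->
  sum_n_m (fun l => (sum_n_m (fun k => c k * cos (INR l * (PI * INR k / INR M) + ph k)) 1 (M - 1)) ^ 2) 0 (2 * M - 1)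
  = INR M * sum_n_m (fun k => c k ^ 2) 1 (M - 1).
Proof.
  intros HM.
  rewrite (ss_ext _ (fun l => sum_n_m (fun j => sum_n_m (fun k => c j * c k *
     (cos (INR l * (PI * INR j / INR M) + ph j) * cos (INR l * (PI * INR k / INR M) + ph k))) 1 (M - 1)) 1 (M - 1))).
  2:{ intros. rewrite sq_sum. apply ss_ext; intros; apply ss_ext; intros; ring. }
  rewrite ss_switch.
  rewrite (ss_ext _ (fun j => sum_n_m (fun k => c j * c k * (if Nat.eqb j k then INR M else 0)) 1 (M - 1))).
  2:{ intros j Hj. rewrite ss_switch. apply ss_ext; intros k Hk. rewrite ss_mult_l. rewrite Ocos by lia. auto. }
  rewrite <- ss_mult_l. apply ss_ext; intros j Hj.
  rewrite (ss_ext _ (fun k => if Nat.eqb k j then c j * c j * INR M else 0)).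
  2:{ intros k _. destruct (Nat.eqb_spec j k), (Nat.eqb_spec k j); subst; try lia; ring. }
  rewrite ss_kron by lia. ring.
Qed.

Definition Pf (M : nat) (s : nat -> R) (y : R) : R := sum_n_m (fun k => s k * ek k y) 1 (M - 1).

Lemma energy (M : nat) (s : nat -> R) (t : R) : (2 <= M)%nat ->
  sum_n_m (fun l => (Pf M s (INR l / INR M + t) - Pf M s (INR l / INR M)) ^ 2) 0 (2 * M - 1)
  = INR M * sum_n_m (fun k => (2 * sqrt 2 * s k * sin (PI * INR k * t / 2)) ^ 2) 1 (M - 1).
Proof.
  intros HM. assert (0 < INR M) by (apply lt_0_INR; lia).
  rewrite <- (GL M (fun k => 2 * sqrt 2 * s k * sin (PI * INR k * t / 2)) (fun k => PI * INR k * t / 2)) by auto.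
  apply ss_ext; intros l _. f_equal. unfold Pf. rewrite <- ss_minus. apply ss_ext; intros k _.
  unfold ek. 
  replace (s k * (sqrt 2 * sin (PI * INR k * (INR l / INR M + t))) - s k * (sqrt 2 * sin (PI * INR k * (INR l / INR M))))
   with (s k * sqrt 2 * (sin (PI * INR k * (INR l / INR M + t)) - sin (PI * INR k * (INR l / INR M)))) by ring.
  set (a := INR l * (PI * INR k / INR M) + PI * INR k * t / 2).
  set (b := PI * INR k * t / 2).
  replace (PI * INR k * (INR l / INR M + t)) with (a + b) by (unfold a, b; field; lra).
  replace (PI * INR k * (INR l / INR M)) with (a - b) by (unfold a, b; field; lra).
  rewrite <- two_sin_cos. ring.
Qed.

Lemma energy_mono (M : nat) (s : nat -> R) (t : R) : (2 <= M)%nat -> 0 <= t <= / INR M ->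
  sum_n_m (fun l => (Pf M s (INR l / INR M + t) - Pf M s (INR l / INR M)) ^ 2) 0 (2 * M - 1)
  <= sum_n_m (fun l => (Pf M s (INR l / INR M + / INR M) - Pf M s (INR l / INR M)) ^ 2) 0 (2 * M - 1).
Proof.
  intros HM Ht. assert (0 < INR M) by (apply lt_0_INR; lia).
  rewrite !energy by auto. apply Rmult_le_compat_l; [lra|]. apply ss_le. intros k Hk.
  rewrite !Rpow_mult_distr. apply Rmult_le_compat_l. apply Rmult_le_pos; [apply Rmult_le_pos|]; apply pow2_ge_0.
  assert (INR k <= INR M - 1) by (change 1 with (INR 1); rewrite <- (minus_INR M 1) by lia; apply le_INR; lia).
  assert (1 <= INR k) by (replace 1 with (INR 1) by auto; apply le_INR; lia).
  pose proof PI_RGT_0.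
  assert (0 <= PI * INR k * t / 2) by (apply Rmult_le_pos; [|lra]; apply Rmult_le_pos; nra).
  assert (PI * INR k * t / 2 <= PI * INR k * / INR M / 2).
  { apply Rmult_le_compat_r; [lra|]. apply Rmult_le_compat_l; [nra|lra]. }
  assert (PI * INR k * / INR M / 2 <= PI / 2).
  { apply Rmult_le_compat_r; [lra|]. rewrite Rmult_assoc. rewrite <- (Rmult_1_r PI) at 2.
    apply Rmult_le_compat_l; [lra|]. apply (Rmult_le_reg_r (INR M)); auto. field_simplify; lra. }
  assert (0 <= sin (PI * INR k * t / 2)) by (apply sin_ge_0; lra).
  assert (sin (PI * INR k * t / 2) <= sin (PI * INR k * / INR M / 2)) by (apply sin_incr_1; lra).
  apply pow_incr. lra.
Qed.

Lemma cont_ext (f g : R -> R) x : (forall y, @eq R (f y) (g y)) -> continuous f x -> continuous g x.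
Proof. apply continuous_ext. Qed.
Lemma cont_mult (f g : R -> R) x : continuous f x -> continuous g x -> continuous (fun y => f y * g y) x.
Proof. intros; apply (continuous_mult f g x); auto. Qed.
Lemma cont_plus (f g : R -> R) x : continuous f x -> continuous g x -> continuous (fun y => f y + g y) x.
Proof. intros; apply (continuous_plus f g x); auto. Qed.
Lemma cont_opp (f : R -> R) x : continuous f x -> continuous (fun y => - f y) x.
Proof. intros. apply (cont_ext (fun y => (-1) * f y)). intros; ring. apply cont_mult; auto. apply continuous_const. Qed.
Lemma cont_minus (f g : R -> R) x : continuous f x -> continuous g x -> continuous (fun y => f y - g y) x.
Proof. intros. apply cont_plus; auto. apply cont_opp; auto. Qed.
Lemma cont_id x : continuous (fun y : R => y) x.
Proof. apply continuous_id. Qed.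
Lemma cont_const (c : R) x : continuous (fun _ : R => c) x.
Proof. apply continuous_const. Qed.
Lemma cont_sq (f : R -> R) x : continuous f x -> continuous (fun y => (f y) ^ 2) x.
Proof. intros. apply (cont_ext (fun y => f y * (f y * 1))). intros; simpl; auto. 
  apply cont_mult; auto. apply cont_mult; auto. apply cont_const. Qed.

Lemma cont_sum (g : nat -> R -> R) a b x : (forall l, continuous (g l) x) ->
  continuous (fun t => sum_n_m (fun l => g l t) a b) x.
Proof.
  intros Hg. induction b.
  - destruct a. apply (cont_ext (g 0%nat)). intros; rewrite sum_n_n; auto. auto.
    apply (cont_ext (fun _ => 0)). intros; rewrite sum0 by lia; auto. apply cont_const.
  - destruct (Compare_dec.le_lt_dec a (S b)).
    + apply (cont_ext (fun t => sum_n_m (fun l => g l t) a b + g (S b) t)).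
      intros; rewrite sumS by lia; auto. apply cont_plus; auto.
    + apply (cont_ext (fun _ => 0)). intros; rewrite sum0 by lia; auto. apply cont_const.
Qed.

Lemma cont_shift (f : R -> R) c x : (forall y, continuous f y) -> continuous (fun t => f (c + t)) x.
Proof. intros Hf. apply (continuous_comp (fun t => c + t) f). apply cont_plus. apply cont_const. apply cont_id. apply Hf. Qed.

Lemma cont_ek k x : continuous (ek k) x.
Proof. unfold ek. apply cont_mult. apply cont_const. apply continuous_sin_comp. apply cont_mult. apply cont_const. apply cont_id. Qed.

Lemma exRI (f : R -> R) a b : (forall y, continuous f y) -> ex_RInt f a b.
Proof. intros; apply (ex_RInt_continuous (V:=R_CompleteNormedModule)); auto. Qed.

Lemma split_int (f : R -> R) (h : R) (n : nat) : (forall y, continuous f y) ->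
  RInt f 0 (INR (S n) * h) = RInt (fun t => sum_n_m (fun l => f (INR l * h + t)) 0 n) 0 h.
Proof.
  intros Hf. induction n.
  - replace (INR 1 * h) with h by (simpl; ring). apply RInt_ext. intros x _. rewrite sum_n_n. simpl. f_equal. ring.
  - rewrite <- (RInt_Chasles f 0 (INR (S n) * h) (INR (S (S n)) * h)) by (apply exRI; auto).
    rewrite IHn.
    assert (E : RInt f (INR (S n) * h) (INR (S (S n)) * h) = RInt (fun t => f (INR (S n) * h + t)) 0 h).
    { pose proof (RInt_comp_lin f 1 (INR (S n) * h) 0 h) as C.
      replace (1 * 0 + INR (S n) * h) with (INR (S n) * h) in C by ring.
      replace (1 * h + INR (S n) * h) with (INR (S (S n)) * h) in C by (rewrite (S_INR (S n)); ring).
      rewrite <- C by (apply exRI; auto).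
      apply RInt_ext. intros x _. unfold scal; simpl. unfold mult; simpl. rewrite Rmult_1_l. f_equal. ring. }
    rewrite E. change (plus ?a ?b) with (a + b).
    rewrite <- (RInt_plus (V:=R_CompleteNormedModule)).
    + apply RInt_ext. intros x _. rewrite sumS by lia. auto.
    + apply exRI. intros; apply cont_sum; intros; apply cont_shift; auto.
    + apply exRI. intros; apply cont_shift; auto.
Qed.

Lemma lub_le (E : R -> Prop) r0 bnd : E r0 -> (forall r, E r -> r <= bnd) ->
  forall r, E r -> r <= real (Lub_Rbar E).
Proof.
  intros H0 Hb r Hr. destruct (Lub_Rbar_correct E) as [ub lub].
  destruct (Lub_Rbar E) eqn:Eq.
  - specialize (ub r Hr). simpl in ub. simpl. exact ub.
  - exfalso. assert (Rbar_le p_infty (Finite bnd)). apply lub. intros x Hx. simpl. apply Hb; auto.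
    simpl in H. auto.
  - exfalso. specialize (ub r0 H0). simpl in ub. auto.
Qed.

Lemma exp_mono x y : x <= y -> exp x <= exp y.
Proof. intros H. destruct (Req_dec x y). subst; lra. left; apply exp_increasing; lra. Qed.

Lemma ln_le0 z : z <= 1 -> ln z <= 0.
Proof. intros H. destruct (Rlt_dec 0 z). rewrite <- ln_1. apply ln_le; lra.
  unfold ln. destruct (Rlt_dec 0 z) as [h|h]. exfalso; auto. lra. Qed.

Lemma Rpow_le1 z c : z <= 1 -> 0 <= c -> Rpower z c <= 1.
Proof. intros. unfold Rpower. apply Rle_trans with (exp 0). apply exp_mono. pose proof (ln_le0 z H). nra. rewrite exp_0; lra. Qed.

Lemma Rpow_exp_mono b x y : b <= 1 -> y <= x -> Rpower b x <= Rpower b y.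
Proof. intros. unfold Rpower. apply exp_mono. pose proof (ln_le0 b H). nra. Qed.

Lemma Rpow_pos z c : 0 < Rpower z c.
Proof. unfold Rpower. apply exp_pos. Qed.

Definition cl (y : R) : R := Rmax 0 (Rmin 1 y).
Lemma cl_in y : 0 <= cl y <= 1.
Proof. unfold cl, Rmax, Rmin. destruct (Rle_dec 1 y), (Rle_dec 0 _); lra. Qed.
Lemma cl_lip x y : Rabs (cl x - cl y) <= Rabs (x - y).
Proof. unfold cl, Rmax, Rmin. destruct (Rle_dec 1 x), (Rle_dec 1 y);
  repeat match goal with |- context[Rle_dec ?a ?b] => destruct (Rle_dec a b) end;
  unfold Rabs; repeat match goal with |- context[Rcase_abs ?t] => destruct (Rcase_abs t) end; lra. Qed.
Lemma cl_id y : 0 <= y <= 1 -> cl y = y.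
Proof. intros. unfold cl, Rmax, Rmin. destruct (Rle_dec 1 y), (Rle_dec 0 _); lra. Qed.

Lemma holder_cont (H : R -> R) (a L : R) : 0 < a ->
  (forall x y, 0 <= x <= 1 -> 0 <= y <= 1 -> Rabs (H x - H y) <= L * Rpower (Rabs (x - y)) a) ->
  forall x, continuous (fun y => H (cl y)) x.
Proof.
  intros Ha Hh x0. apply continuity_pt_filterlim.
  unfold continuity_pt, continue_in, limit1_in, limit_in. simpl. unfold R_dist.
  intros eps Heps.
  set (L0 := Rabs L + 1).
  assert (HL0 : 0 < L0) by (unfold L0; pose proof (Rabs_pos L); lra).
  exists (Rpower (eps / L0) (/ a)). split. apply Rpow_pos.
  intros x [_ Hx].
  destruct (Req_dec (cl x) (cl x0)) as [E|E].
  - rewrite E. replace (H (cl x0) - H (cl x0)) with 0 by ring. rewrite Rabs_R0. lra.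
  - assert (0 < Rabs (cl x - cl x0)) by (apply Rabs_pos_lt; lra).
    pose proof (cl_lip x x0).
    eapply Rle_lt_trans. apply Hh; apply cl_in.
    apply Rle_lt_trans with (L0 * Rpower (Rabs (cl x - cl x0)) a).
    + apply Rmult_le_compat_r. left; apply Rpow_pos. unfold L0. pose proof (Rle_abs L); lra.
    + apply Rlt_le_trans with (L0 * Rpower (Rpower (eps / L0) (/ a)) a).
      * apply Rmult_lt_compat_l; auto. apply Rlt_Rpower_l; auto. lra.
      * rewrite Rpower_mult. rewrite Rinv_l by lra. rewrite Rpower_1. right; field; lra.
        apply Rdiv_lt_0_compat; lra.
Qed.

Definition ind (M l : nat) : R := (if Nat.eqb l 0 then 1 else 0) + (if Nat.eqb l (M - 1) then 1 else 0)
  + (if Nat.eqb l M then 1 else 0) + (if Nat.eqb l (2 * M - 1) then 1 else 0).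

Lemma ind_nonneg M l : 0 <= ind M l.
Proof. unfold ind. destruct (Nat.eqb l 0), (Nat.eqb l (M-1)), (Nat.eqb l M), (Nat.eqb l (2*M-1)); lra. Qed.
Lemma ind_ge1 M l : (l = 0 \/ l = M - 1 \/ l = M \/ l = 2 * M - 1)%nat -> 1 <= ind M l.
Proof. intros H. unfold ind.
  destruct (Nat.eqb_spec l 0), (Nat.eqb_spec l (M-1)), (Nat.eqb_spec l M), (Nat.eqb_spec l (2*M-1)); try lra; lia. Qed.

Lemma ind_sum M : (2 <= M)%nat -> @eq R (sum_n_m (ind M) 0 (2 * M - 1)) 4.
Proof.
  intros. unfold ind. rewrite !ss_plus. rewrite !ss_kron by lia. ring.
Qed.

Lemma node_sum (M : nat) (V : nat -> R) (A B : R) : (2 <= M)%nat -> 0 <= A -> 0 <= B ->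
  V 0%nat = 0 -> V M = 0 -> (forall l, (l <= M)%nat -> V (2 * M - l)%nat = - V l) ->
  (forall l, (1 <= l <= M - 1)%nat -> (V l) ^ 2 <= B) ->
  (forall l, (1 <= l)%nat -> (l + 1 <= M - 1)%nat -> (V (S l) - V l) ^ 2 <= A) ->
  sum_n_m (fun l => (V (S l) - V l) ^ 2) 0 (2 * M - 1) <= 2 * INR M * A + 4 * B.
Proof.
  intros HM HA HB V0 VM Vr VB VA.
  apply Rle_trans with (sum_n_m (fun l => A + ind M l * B) 0 (2 * M - 1)).
  - apply ss_le. intros l Hl.
    assert (Hi := ind_nonneg M l).
    assert (Bcase : (V (S l) - V l) ^ 2 <= B -> (l = 0 \/ l = M - 1 \/ l = M \/ l = 2 * M - 1)%nat ->
                    (V (S l) - V l) ^ 2 <= A + ind M l * B).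
    { intros h1 h2. pose proof (ind_ge1 M l h2). assert (B <= ind M l * B) by (rewrite <- (Rmult_1_l B) at 1; apply Rmult_le_compat_r; lra). lra. }
    destruct (Nat.eq_dec l 0) as [->|n0].
    { apply Bcase; [|lia]. rewrite V0. replace (V 1%nat - 0) with (V 1%nat) by ring. apply VB; lia. }
    destruct (Nat.eq_dec l (M - 1)) as [->|n1].
    { apply Bcase; [|lia]. replace (S (M - 1)) with M by lia. rewrite VM.
      replace ((0 - V (M - 1)%nat) ^ 2) with ((V (M - 1)%nat) ^ 2) by ring. apply VB; lia. }
    destruct (Nat.eq_dec l M) as [->|n2].
    { apply Bcase; [|lia]. rewrite VM. replace (S M) with (2 * M - (M - 1))%nat by lia. rewrite Vr by lia.
      replace ((- V (M - 1)%nat - 0) ^ 2) with ((V (M - 1)%nat) ^ 2) by ring. apply VB; lia. }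
    destruct (Nat.eq_dec l (2 * M - 1)) as [->|n3].
    { apply Bcase; [|lia]. replace (S (2 * M - 1)) with (2 * M - 0)%nat by lia. rewrite Vr, V0 by lia.
      rewrite Vr by lia. replace ((- 0 - - V 1%nat) ^ 2) with ((V 1%nat) ^ 2) by ring. apply VB; lia. }
    destruct (Compare_dec.le_lt_dec l (M - 2)).
    { assert (h := VA l ltac:(lia) ltac:(lia)). assert (0 <= ind M l * B) by (apply Rmult_le_pos; lra). lra. }
    set (l' := (2 * M - S l)%nat).
    replace (S l) with (2 * M - l')%nat by (unfold l'; lia).
    replace l with (2 * M - S l')%nat at 1 by (unfold l'; lia).
    rewrite !Vr by (unfold l'; lia).
    assert (h := VA l' ltac:(unfold l'; lia) ltac:(unfold l'; lia)).
    replace ((- V l' - - V (S l')) ^ 2) with ((V (S l') - V l') ^ 2) by ring. assert (0 <= ind M l * B) by (apply Rmult_le_pos; lra). lra.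
  - rewrite ss_plus, ss_const, ss_mult_r, ind_sum by auto.
    replace (S (2 * M - 1) - 0)%nat with (2 * M)%nat by lia. rewrite mult_INR. simpl. lra.
Qed.

Lemma Pf0 M s : Pf M s 0 = 0.
Proof. unfold Pf. apply ss_zero. intros. unfold ek. rewrite Rmult_0_r, sin_0. ring. Qed.
Lemma Pf1 M s : Pf M s 1 = 0.
Proof. unfold Pf. apply ss_zero. intros. unfold ek. rewrite Rmult_1_r, (Rmult_comm PI), sin_nPI. ring. Qed.
Lemma Pf_refl M s l : (2 <= M)%nat -> (l <= 2 * M)%nat ->
  Pf M s (INR (2 * M - l) / INR M) = - Pf M s (INR l / INR M).
Proof.
  intros HM Hl. assert (0 < INR M) by (apply lt_0_INR; lia).
  unfold Pf. rewrite <- ss_opp. apply ss_ext. intros k _. unfold ek.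
  replace (PI * INR k * (INR (2 * M - l) / INR M)) with (- (PI * INR k * (INR l / INR M)) + 2 * INR k * PI).
  rewrite sin_period, sin_neg. ring.
  rewrite minus_INR by lia. rewrite mult_INR. simpl. field. lra.
Qed.

Lemma sq_le (x K : R) : Rabs x <= K -> x ^ 2 <= K ^ 2.
Proof. intros. rewrite <- pow2_abs. apply pow_incr. split; [apply Rabs_pos|auto]. Qed.

Theorem lemma5p5 (theta alpha : R) :
  0 < theta -> 0 < alpha < 1 / 2 ->
  exists C : R, 0 < C /\
    forall (H : R -> R) (M : nat),
      (2 <= M)%nat ->
      in_holder (2 * alpha) H -> in_D theta alpha H ->
      let K := Rmax (Rmax (supnorm H) (holder_norm (2 * alpha) H))
                    (Dnorm theta alpha H) in
      L2norm_sq (fun y => H y - HM M H y)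
        <= C * K ^ 2 * Rpower (/ INR M) (8 * alpha ^ 2 / (4 * alpha + 1)).
Proof.
  intros Hth [Ha0 Ha1].
  exists 16. split; [lra|].
  intros H M HM2 Hhol HD K.
  destruct Hhol as [L Hh].
  assert (Hapos : 0 < 2 * alpha) by lra.
  assert (HMpos : 0 < INR M) by (apply lt_0_INR; lia).
  assert (Hsup : forall x, 0 <= x <= 1 -> Rabs (H x) <= supnorm H).
  { intros x Hx. unfold supnorm. apply (lub_le _ (Rabs (H 0)) (Rabs (H 0) + Rabs L)).
    - exists 0. split; [lra|auto].
    - intros r [z [Hz ->]].
      assert (h1 := Hh z 0 Hz ltac:(lra)).
      assert (h2 : Rpower (Rabs (z - 0)) (2 * alpha) <= 1).
      { apply Rpow_le1; [|lra]. rewrite Rminus_0_r, Rabs_right; lra. }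
      assert (h3 : 0 < Rpower (Rabs (z - 0)) (2 * alpha)) by apply Rpow_pos.
      assert (h4 : L * Rpower (Rabs (z - 0)) (2 * alpha) <= Rabs L).
      { apply Rle_trans with (Rabs L * Rpower (Rabs (z - 0)) (2 * alpha)).
        apply Rmult_le_compat_r; [lra| apply Rle_abs].
        rewrite <- (Rmult_1_r (Rabs L)) at 2. apply Rmult_le_compat_l; [apply Rabs_pos|lra]. }
      replace (H z) with (H 0 + (H z - H 0)) by ring.
      eapply Rle_trans. apply Rabs_triang. lra.
    - exists x. split; auto. }
  assert (Hsem : forall x y, 0 <= x <= 1 -> 0 <= y <= 1 -> x <> y ->
     Rabs (H x - H y) <= holder_seminorm (2 * alpha) H * Rpower (Rabs (x - y)) (2 * alpha)).
  { intros x y Hx Hy Hxy.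
    assert (hR : forall x y, 0 < Rpower (Rabs (x - y)) (2 * alpha)) by (intros; apply Rpow_pos).
    assert (hrat : forall x y, 0 <= x <= 1 -> 0 <= y <= 1 ->
       Rabs (H x - H y) / Rpower (Rabs (x - y)) (2 * alpha) <= Rabs L).
    { intros x' y' Hx' Hy'. unfold Rdiv. apply (Rmult_le_reg_r (Rpower (Rabs (x' - y')) (2 * alpha))). auto.
      rewrite Rmult_assoc, Rinv_l, Rmult_1_r by (apply Rgt_not_eq; apply hR).
      eapply Rle_trans. apply Hh; auto. apply Rmult_le_compat_r. left; apply hR. apply Rle_abs. }
    assert (hle : Rabs (H x - H y) / Rpower (Rabs (x - y)) (2 * alpha) <= holder_seminorm (2 * alpha) H).
    { unfold holder_seminorm.
      apply (lub_le _ (Rabs (H 0 - H 1) / Rpower (Rabs (0 - 1)) (2 * alpha)) (Rabs L)).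
      - exists 0, 1. repeat split; try lra.
      - intros r [x' [y' [Hx' [Hy' [_ ->]]]]]. apply hrat; auto.
      - exists x, y. repeat split; auto; lra. }
    apply (Rmult_le_compat_r (Rpower (Rabs (x - y)) (2 * alpha))) in hle; [|left; apply hR].
    unfold Rdiv in hle. rewrite Rmult_assoc, Rinv_l, Rmult_1_r in hle by (apply Rgt_not_eq; apply hR).
    exact hle. }
  assert (Hsup0 : 0 <= supnorm H).
  { apply Rle_trans with (Rabs (H 0)). apply Rabs_pos. apply Hsup; lra. }
  assert (Hsem0 : 0 <= holder_seminorm (2 * alpha) H).
  { assert (h := Hsem 0 1 ltac:(lra) ltac:(lra) ltac:(lra)).
    assert (h2 := Rpow_pos (Rabs (0 - 1)) (2 * alpha)). pose proof (Rabs_pos (H 0 - H 1)).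
    destruct (Rle_or_lt 0 (holder_seminorm (2 * alpha) H)) as [h3|h3]; auto.
    assert (holder_seminorm (2 * alpha) H * Rpower (Rabs (0 - 1)) (2 * alpha) < 0).
    { apply Rmult_neg_pos; lra. } lra. }
  assert (HK1 : supnorm H <= K).
  { unfold K. eapply Rle_trans; [|apply Rmax_l]. apply Rmax_l. }
  assert (HK2 : holder_seminorm (2 * alpha) H <= K).
  { unfold K. eapply Rle_trans; [|apply Rmax_l]. eapply Rle_trans; [|apply Rmax_r].
    unfold holder_norm. lra. }
  assert (HK0 : 0 <= K) by lra.
  assert (HB : forall x, 0 <= x <= 1 -> Rabs (H x) <= K).
  { intros. eapply Rle_trans; [apply Hsup; auto|auto]. }
  set (u := Rpower (/ INR M) (2 * alpha)).
  assert (Hu : 0 < u) by apply Rpow_pos.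
  assert (HHol : forall x y, 0 <= x <= 1 -> 0 <= y <= 1 -> Rabs (x - y) <= / INR M ->
                 Rabs (H x - H y) <= K * u).
  { intros x y Hx Hy Hxy. destruct (Req_dec x y) as [->|Hne].
    - replace (H y - H y) with 0 by ring. rewrite Rabs_R0. apply Rmult_le_pos; lra.
    - eapply Rle_trans. apply Hsem; auto.
      apply Rmult_le_compat; auto. left; apply Rpow_pos.
      unfold u. apply Rle_Rpower_l. lra. split; auto. apply Rabs_pos_lt. lra. }
  assert (Hcont : forall y, continuous (fun y => (H (cl y) - HM M H y) ^ 2) y).
  { intros y. apply cont_sq. apply cont_minus. apply (holder_cont H (2 * alpha) L); auto.
    unfold HM. apply cont_sum. intros k. apply cont_mult. apply cont_const. apply cont_ek. }
  set (A := (K * u) ^ 2). set (B := K ^ 2).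
  assert (HA0 : 0 <= A) by (unfold A; apply pow2_ge_0).
  assert (HB0 : 0 <= B) by (unfold B; apply pow2_ge_0).
  set (s := Hcoef M H).
  assert (HPf : forall y, HM M H y = Pf M s y) by (intros; reflexivity).
  assert (Hnode : forall l, (1 <= l <= M - 1)%nat -> Pf M s (INR l / INR M) = H (INR l / INR M)).
  { intros l Hl. rewrite <- HPf. apply interp_nodes; auto. }
  assert (Hin : forall l, (l <= M)%nat -> 0 <= INR l / INR M <= 1).
  { intros l Hl. split. apply Rle_mult_inv_pos; auto. apply pos_INR.
    apply (Rmult_le_reg_r (INR M)); auto. field_simplify; try lra. apply le_INR; auto. }
  assert (Hpt : forall t, 0 <= t <= / INR M ->
     sum_n_m (fun l => (H (cl (INR l * / INR M + t)) - HM M H (INR l * / INR M + t)) ^ 2) 0 (M - 1)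
     <= 6 * INR M * A + 10 * B).
  { intros t Ht.
    assert (Hy : forall l, (l <= M - 1)%nat -> 0 <= INR l / INR M + t <= 1).
    { intros l Hl. pose proof (Hin l ltac:(lia)). split; [lra|].
      assert (INR l <= INR M - 1) by (change 1 with (INR 1); rewrite <- minus_INR by lia; apply le_INR; lia).
      assert (INR l / INR M <= 1 - / INR M).
      { apply (Rmult_le_reg_r (INR M)); auto. field_simplify; lra. }
      lra. }
    apply Rle_trans with (sum_n_m (fun l => 2 * (H (INR l / INR M + t) - Pf M s (INR l / INR M)) ^ 2
             + 2 * (Pf M s (INR l / INR M + t) - Pf M s (INR l / INR M)) ^ 2) 0 (M - 1)).
    { apply ss_le. intros l Hl. change (INR l * / INR M) with (INR l / INR M).
      rewrite cl_id by (apply Hy; lia). rewrite HPf.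
      set (a1 := H (INR l / INR M + t)). set (b1 := Pf M s (INR l / INR M + t)). set (c1 := Pf M s (INR l / INR M)).
      assert (0 <= (a1 - c1 + (b1 - c1)) ^ 2) by apply pow2_ge_0.
      replace ((a1 - b1) ^ 2) with (2 * (a1 - c1) ^ 2 + 2 * (b1 - c1) ^ 2 - (a1 - c1 + (b1 - c1)) ^ 2) by ring.
      lra. }
    rewrite ss_plus, !ss_mult_l.
    assert (S1 : sum_n_m (fun l => (H (INR l / INR M + t) - Pf M s (INR l / INR M)) ^ 2) 0 (M - 1)
                 <= INR M * A + B).
    { apply Rle_trans with (sum_n_m (fun l => A + (if Nat.eqb l 0 then B else 0)) 0 (M - 1)).
      - apply ss_le. intros l Hl. destruct (Nat.eqb_spec l 0) as [->|Hl0].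
        + replace (INR 0 / INR M) with 0 by (simpl; field; lra). rewrite Pf0, Rplus_0_l, Rminus_0_r.
          assert (Rabs (H t) <= K). { apply HB. pose proof (Hy 0%nat ltac:(lia)) as hy. simpl in hy. replace (0 / INR M) with 0 in hy by (field; lra). lra. } apply sq_le in H0. unfold B. lra.
        + rewrite Hnode by lia. unfold A. rewrite Rplus_0_r. apply sq_le. apply HHol; auto.
          apply Hy; lia. apply Hin; lia. replace (INR l / INR M + t - INR l / INR M) with t by ring.
          rewrite Rabs_right; lra.
      - rewrite ss_plus, ss_const, ss_kron by lia. replace (S (M - 1) - 0)%nat with M by lia. lra. }
    assert (S2 : sum_n_m (fun l => (Pf M s (INR l / INR M + t) - Pf M s (INR l / INR M)) ^ 2) 0 (M - 1)
                 <= 2 * INR M * A + 4 * B).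
    { apply Rle_trans with (sum_n_m (fun l => (Pf M s (INR l / INR M + t) - Pf M s (INR l / INR M)) ^ 2) 0 (2 * M - 1)).
      { rewrite (sum_n_m_Chasles _ 0 (M - 1) (2 * M - 1)) by lia.
        change (plus ?x ?y) with (x + y).
        assert (0 <= sum_n_m (fun l => (Pf M s (INR l / INR M + t) - Pf M s (INR l / INR M)) ^ 2) (S (M - 1)) (2 * M - 1)).
        { apply ss_nonneg. intros; apply pow2_ge_0. }
        lra. }
      apply Rle_trans with (sum_n_m (fun l => (Pf M s (INR l / INR M + / INR M) - Pf M s (INR l / INR M)) ^ 2) 0 (2 * M - 1)).
      { apply energy_mono; auto. }
      rewrite (ss_ext _ (fun l => (Pf M s (INR (S l) / INR M) - Pf M s (INR l / INR M)) ^ 2)).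
      2:{ intros l _. rewrite S_INR.
          replace ((INR l + 1) / INR M) with (INR l / INR M + / INR M) by (field; lra). reflexivity. }
      apply (node_sum M (fun l => Pf M s (INR l / INR M)) A B); auto.
      - simpl. replace (0 / INR M) with 0 by (field; lra). apply Pf0.
      - simpl. replace (INR M / INR M) with 1 by (field; lra). apply Pf1.
      - intros l Hl. apply Pf_refl; lia.
      - intros l Hl. cbv beta. rewrite Hnode by lia. unfold B. apply sq_le. apply HB. apply Hin; lia.
      - intros l Hl1 Hl2. cbv beta. rewrite !Hnode by lia. unfold A. apply sq_le. apply HHol.
        apply Hin; lia. apply Hin; lia. rewrite S_INR.
        replace ((INR l + 1) / INR M - INR l / INR M) with (/ INR M) by (field; lra).
        rewrite Rabs_right; [lra|]. left; apply Rinv_0_lt_compat; auto. }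
    lra. }
  unfold L2norm_sq.
  rewrite (RInt_ext _ (fun y => (H (cl y) - HM M H y) ^ 2)).
  2:{ intros x Hx. rewrite Rmin_left, Rmax_right in Hx by lra. rewrite cl_id by lra. reflexivity. }
  assert (E1 : INR (S (M - 1)) * / INR M = 1).
  { replace (S (M - 1)) with M by lia. field; lra. }
  assert (Eint : RInt (fun y => (H (cl y) - HM M H y) ^ 2) 0 1
               = RInt (fun y => (H (cl y) - HM M H y) ^ 2) 0 (INR (S (M - 1)) * / INR M)) by (rewrite E1; auto).
  rewrite Eint, split_int by auto.
  apply Rle_trans with (RInt (fun _ => 6 * INR M * A + 10 * B) 0 (/ INR M)).
  { apply RInt_le.
    - left; apply Rinv_0_lt_compat; auto.
    - apply exRI. intros; apply (cont_sum (fun l t => (H (cl (INR l * / INR M + t)) - HM M H (INR l * / INR M + t)) ^ 2)); intros l; apply (cont_shift (fun y => (H (cl y) - HM M H y) ^ 2) (INR l * / INR M)); auto.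
    - apply exRI. intros; apply cont_const.
    - intros x Hx. apply Hpt. lra. }
  rewrite RInt_const. unfold scal; simpl; unfold mult; simpl.
  set (g := 8 * alpha ^ 2 / (4 * alpha + 1)).
  assert (Hg1 : g <= 2 * alpha + 2 * alpha).
  { assert (2 * alpha + 2 * alpha - g = (8 * alpha ^ 2 + 4 * alpha) * / (4 * alpha + 1)) by (unfold g; field; lra).
    assert (0 <= (8 * alpha ^ 2 + 4 * alpha) * / (4 * alpha + 1)) by (apply Rle_mult_inv_pos; nra).
    lra. }
  assert (Hg2 : g <= 1).
  { assert (1 - g = (4 * alpha + 1 - 8 * alpha ^ 2) * / (4 * alpha + 1)) by (unfold g; field; lra).
    assert (0 <= (4 * alpha + 1 - 8 * alpha ^ 2) * / (4 * alpha + 1)) by (apply Rle_mult_inv_pos; nra).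
    lra. }
  assert (Hm1 : / INR M <= 1).
  { rewrite <- Rinv_1. apply Rinv_le_contravar. lra. change 1 with (INR 1). apply le_INR; lia. }
  assert (Hm0 : 0 < / INR M) by (apply Rinv_0_lt_compat; auto).
  assert (X1 : u * u <= Rpower (/ INR M) g).
  { unfold u. rewrite <- Rpower_plus. apply Rpow_exp_mono; auto. }
  assert (X2 : / INR M <= Rpower (/ INR M) g).
  { rewrite <- (Rpower_1 (/ INR M)) at 1 by auto. apply Rpow_exp_mono; auto. }
  assert (EA : (/ INR M - 0) * (6 * INR M * A + 10 * B) = 6 * K ^ 2 * (u * u) + 10 * K ^ 2 * / INR M).
  { unfold A, B. field. lra. }
  rewrite EA.
  assert (0 <= K ^ 2) by apply pow2_ge_0.
  assert (6 * K ^ 2 * (u * u) <= 6 * K ^ 2 * Rpower (/ INR M) g) by (apply Rmult_le_compat_l; lra).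
  assert (10 * K ^ 2 * / INR M <= 10 * K ^ 2 * Rpower (/ INR M) g) by (apply Rmult_le_compat_l; lra).
  unfold B. replace (8 * (alpha * (alpha * 1)) / (4 * alpha + 1)) with g by (unfold g; field; lra). lra.
Qed.
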